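(* Let $E$ be a finite set and $V \subset \mathbb R^E$ a linear subspace defining an oriented matroid $M$. If $F$ is an acyclic flat of $M$, then \[ \mathcal Y_V \cap \big(0^F \times (\mathbb P^1_{\mathbb R})^{E \setminus F}\big) = \mathcal Y_{V \cap \ker(\pi_F)}. \]
   Context: $\mathbb P^1_{\mathbb R} = \mathbb R\cup\{\infty\}$. For a linear subspace $W \subset \mathbb R^E$, $\mathcal Y_W$ denotes the closure of $W \cap \mathbb R_{\geq 0}^E$ in $(\mathbb P^1_{\mathbb R})^E$ in the analytic topology. $\pi_F : \mathbb R^E \to \mathbb R^F$ is the coordinate projection, so $V\cap \ker(\pi_F)$ is the subspace of vectors of $V$ vanishing on $F$. $0^F \times (\mathbb P^1_{\mathbb R})^{E\setminus F}$ is the set of points of $(\mathbb P^1_{\mathbb R})^E$ whose coordinates in $F$ are $0$. Flats of $M$ are the zero sets $\{i: v_i=0\}$ of $v \in V$; a flat $F$ is acyclic if some $v \in V$ has $v_i = 0$ for $i \in F$ and $v_i > 0$ for $i \notin F$. *)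

(* Defs.v *)
From HB Require Import structures.
From mathcomp Require Import all_boot all_order all_algebra.
From mathcomp Require Import reals.
Set Implicit Arguments. Unset Strict Implicit. Unset Printing Implicit Defensive.
Import Order.TTheory GRing.Theory Num.Theory.
Local Open Scope ring_scope.

(* P^1_R = R ∪ {∞}, represented as option R with None = ∞. *)
Definition P1 (R : realType) := option R.

(* Basic neighbourhoods of the analytic topology of P^1_R:
   for a finite point a, the open interval (a - e, a + e);
   for ∞, the set {∞} ∪ {b : |b| > 1/e} (i.e. |1/b| < e in the chart at ∞). *)
Definition P1_ball (R : realType) (e : R) (x y : P1 R) : Prop :=
  match x, y with
  | Some a, Some b => `|b - a| < e
  | Some _, None => False
  | None, Some b => e^-1 < `|b|
  | None, None => True
  end.

Notation vecE E R := {ffun E -> R^o}.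

(* Closure in (P^1_R)^E (product of analytic topologies, E finite) of a set S
   of points, written via the neighbourhood basis of products of balls. *)
Definition P1_closure (R : realType) (E : finType) (S : (E -> P1 R) -> Prop)
    (p : E -> P1 R) : Prop :=
  forall e : R, 0 < e -> exists q, S q /\ forall i, P1_ball e (p i) (q i).

Definition Y (R : realType) (E : finType) (W : vecE E R -> Prop) : (E -> P1 R) -> Prop :=
  P1_closure (fun q => exists v : vecE E R,
      [/\ W v, (forall i, 0 <= v i) & q = (fun i => Some (v i))]).

Definition cap_ker (R : realType) (E : finType) (V : {vspace vecE E R}) (F : {set E})
  : vecE E R -> Prop := fun v => v \in V /\ forall i, i \in F -> v i = 0.

Definition flat (R : realType) (E : finType) (V : {vspace vecE E R}) (F : {set E}) : Prop :=
  exists2 v, v \in V & F = [set i | v i == 0].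

Definition acyclic_flat (R : realType) (E : finType) (V : {vspace vecE E R}) (F : {set E})
  : Prop :=
  flat V F /\ exists2 v, v \in V &
    (forall i, i \in F -> v i = 0) /\ (forall i, i \notin F -> 0 < v i).

(* Main.v *)
Require Import Defs.
From HB Require Import structures.
From mathcomp Require Import all_boot all_order all_algebra.
From mathcomp Require Import reals.
From mathcomp Require Import ring lra.
Import Order.TTheory GRing.Theory Num.Theory.
Local Open Scope ring_scope.

Section S.
Variables (R : realType) (E : finType).
Implicit Types (x : {ffun E -> R^o}).

Definition dlt (k : E) : {ffun E -> R^o} := [ffun l => (l == k)%:R].

Lemma ffun_expand x : x = \sum_k x k *: dlt k.
Proof.
apply/ffunP => l; rewrite sum_ffunE (bigD1 l) //= big1 => [|k /negbTE hk].
  by rewrite !ffunE eqxx /= addr0 mulr1n; exact: (esym (mulr1 (x l : R))).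
by rewrite !ffunE eq_sym hk /= mulr0n; exact: (mulr0 (x k : R)).
Qed.

Lemma linf_expand (L : {linear {ffun E -> R^o} -> R^o}) x :
  L x = \sum_k x k * L (dlt k).
Proof.
by rewrite {1}(ffun_expand x) linear_sum; apply: eq_bigr => k _; rewrite linearZ.
Qed.

End S.

Section S2.
Variables (R : realType) (E : finType) (V : {vspace {ffun E -> R^o}}) (F : {set E}).

Definition piF (x : {ffun E -> R^o}) : {ffun E -> R^o} :=
  [ffun i => if i \in F then x i else 0].

Lemma piF_sum n (c : 'I_n -> R) (b : 'I_n -> {ffun E -> R^o}) :
  piF (\sum_i c i *: b i) = \sum_i c i *: piF (b i).
Proof.
apply/ffunP => l; rewrite !ffunE !sum_ffunE; case: ifP => hl.
  by apply: eq_bigr => i _; rewrite !ffunE hl.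
by rewrite big1 // => i _; rewrite !ffunE hl; exact: (mulr0 (c i)).
Qed.

Lemma section_bound : exists C : R, 0 <= C /\ forall v, v \in V -> exists2 z, z \in V &
   (forall i, i \in F -> z i = v i) /\
   forall d, 0 <= d -> (forall k, k \in F -> `|v k| <= d) -> forall i, `|z i| <= d * C.
Proof.
pose B := vbasis V.
pose X := map_tuple piF B.
have XE : forall i : 'I_(\dim V), X`_i = piF B`_i.
  by move=> i; rewrite (nth_map 0) ?size_tuple.
pose c (i : 'I_(\dim V)) (k : E) := coord X i (@dlt R E k).
pose C := \sum_j \sum_i (\sum_k `|c i k|) * `|B`_i j|.
have C0 : 0 <= C by apply: sumr_ge0 => j _; apply: sumr_ge0 => i _;
  by apply: mulr_ge0 => //; apply: sumr_ge0 => *.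
exists C; split => // v vV.
exists (\sum_i coord X i (piF v) *: B`_i).
  by apply: memv_suml => i _; apply: memvZ; apply: vbasis_mem; apply: mem_nth; rewrite size_tuple.
have pvX : piF v \in span X.
  rewrite (coord_vbasis vV) piF_sum; apply: memv_suml => i _; apply: memvZ.
  by rewrite -XE; apply: memv_span; apply: mem_nth; rewrite size_tuple.
split.
  move=> k kF.
  move/ffunP/(_ k): (coord_span pvX).
  rewrite !ffunE kF sum_ffunE => ->; rewrite sum_ffunE.
  apply: eq_bigr => i _; rewrite !ffunE XE !ffunE kF //.
move=> d d0 hd j.
rewrite sum_ffunE.
apply: le_trans (ler_norm_sum _ _ _) _.
have CjC : \sum_i (\sum_k `|c i k|) * `|B`_i j| <= C.

  rewrite /C (bigD1 j) //= lerDl; apply: sumr_ge0 => j' _; apply: sumr_ge0 => i _;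
  by apply: mulr_ge0 => //; apply: sumr_ge0 => *.
apply: le_trans (ler_wpM2l d0 CjC); rewrite mulr_sumr; apply: ler_sum => i _.
rewrite ffunE normrM mulrA; apply: ler_wpM2r => //.
rewrite (@linf_expand R E (coord X i)) mulr_sumr.
apply: le_trans (ler_norm_sum _ _ _) _; apply: ler_sum => k _.
rewrite normrM ffunE; apply: ler_wpM2r => //.
case: ifP => kF; first exact: hd.
by rewrite normr0.
Qed.
End S2.
Lemma arith (R : realType) (K X a b c : R) : 0 <= K -> 1 <= X -> (1 + K) * X < b -> c <= K -> a <= X -> a < b - c.
Proof. move=> K0 X1 *; have : 0 <= K * (X - 1) by rewrite mulr_ge0 // subr_ge0. nra. Qed.

Theorem corollary3p5 (R : realType) (E : finType) (V : {vspace {ffun E -> R^o}})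
    (F : {set E}) :
  acyclic_flat V F ->
  forall p : E -> P1 R,
    (Y (fun v => v \in V) p /\ (forall i, i \in F -> p i = Some 0)) <->
    Y (cap_ker V F) p.
Proof.
move=> [_ [w wV [wF wnF]]] p; split; last first.
  move=> Yp; split.
    move=> e e0; have [q [[v [[vV _] v0 ->]] hb]] := Yp e e0.
    by exists (fun i => Some (v i)); split => //; exists v.
  move=> i iF; case pE: (p i) => [a|].
    have ha : forall e : R, 0 < e -> `|a| < e.
      move=> e e0; have [q [[v [[vV vF] v0 ->]] hb]] := Yp e e0.
      by have := hb i; rewrite pE /= vF // sub0r normrN.
    case: (eqVneq a 0) => [->//|a0].
    have a1 : 0 < `|a| by rewrite normr_gt0.
    by have := ha _ a1; rewrite ltxx.
  have [q [[v [[vV vF] v0 ->]] hb]] := Yp 1 ltr01.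
  by have := hb i; rewrite pE /= vF // normr0 invr1 ltr10.
case=> Yp pF.
have [C [C0 hC]] := @section_bound R E V F.
pose S := \sum_(i | i \notin F) (w i)^-1.
pose M := \sum_i `|w i|.
have S0 : 0 <= S by apply: sumr_ge0 => i iF; rewrite invr_ge0 ltW // wnF.
have M0 : 0 <= M by apply: sumr_ge0 => *.
have Sw : forall i, i \notin F -> 1 <= S * w i.
  move=> i iF; have wi := wnF i iF.
  have : (w i)^-1 <= S.
    by rewrite /S (bigD1 i) //= lerDl; apply: sumr_ge0 => j /andP [jF _]; rewrite invr_ge0 ltW // wnF.
  by move=> h; apply: le_trans (ler_wpM2r (ltW wi) h); rewrite mulVf ?gt_eqF.
have wM : forall i, `|w i| <= M.
  by move=> i; rewrite /M (bigD1 i) //= lerDl; apply: sumr_ge0 => *.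
pose K := C * (1 + S * M).
have K0 : 0 <= K by rewrite mulr_ge0 // addr_ge0 // mulr_ge0.
move=> e e0.
pose e' := Num.min e 1.
have e'0 : 0 < e' by rewrite lt_min e0 ltr01.
have e'e : e' <= e by rewrite ge_min lexx.
have e'1 : e' <= 1 by rewrite ge_min lexx orbT.
pose d := e' / (1 + K).
have K1 : 0 < 1 + K by rewrite ltr_wpDr.
have d0 : 0 < d by rewrite divr_gt0.
have dK : d * (1 + K) = e' by rewrite /d mulfVK ?gt_eqF.
have d1 : d <= 1.
  rewrite /d ler_pdivrMr // mul1r; apply: le_trans e'1 _; by rewrite lerDl.
have dE : d^-1 = (1 + K) * e'^-1 by rewrite /d invf_div mulrC.
clearbody d.
have [q [[v [vV v0 ->]] hb]] := Yp d d0.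
have hd : forall k, k \in F -> `|v k| <= d.
  by move=> k kF; have := hb k; rewrite pF //= subr0 => /ltW.
have [z zV [zF zb]] := hC v vV.
have {}zb := zb d (ltW d0) hd.
pose t := d * C * S.
pose u := v - z + t *: w.
have uE : forall i, u i = v i - z i + t * w i by move=> i; rewrite !ffunE.
have uv : forall i, `|u i - v i| <= d * K.
  move=> i; have -> : u i - v i = - z i + t * w i by rewrite uE; ring.
  apply: le_trans (ler_normD _ _) _; rewrite normrN normrM.
  rewrite /K mulrDr mulr1 mulrA mulrDr; apply: lerD => //.
  rewrite /t ger0_norm; last by apply: mulr_ge0 => //; apply: mulr_ge0 => //; exact: ltW.
  rewrite -!mulrA; apply: ler_wpM2l; first exact: ltW.
  by apply: ler_wpM2l => //; apply: ler_wpM2l.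
exists (fun i => Some (u i)); split.
  exists u; split => //.
    split; first by rewrite /u rpredD ?rpredB ?rpredZ.
    by move=> i iF; rewrite uE zF // wF // subrr mulr0 add0r.
  move=> i; rewrite uE; case: (boolP (i \in F)) => iF.
    by rewrite zF // wF // subrr mulr0 add0r.
  have hz : z i <= d * C by apply: le_trans (ler_norm _) (zb i).
  have : d * C <= t * w i.
    by rewrite /t -mulrA -{1}(mulr1 (d * C)) ler_wpM2l ?mulr_ge0 ?(ltW d0) // Sw.
  have := v0 i; lra.
move=> i; have := hb i; case: (p i) => [a|] /=.
  move=> h; rewrite -(subrK (v i) (u i)) -addrA.
  apply: le_lt_trans (ler_normD _ _) _.
  apply: lt_le_trans e'e; rewrite -dK mulrDr mulr1 [d + _]addrC.
  exact: ler_ltD.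
move=> h.
have hu : `|v i| - `|u i - v i| <= `|u i|.
  have := ler_normD (v i - u i) (u i); rewrite subrK distrC => h'; lra.
apply: lt_le_trans hu.
have X1 : 1 <= e'^-1 by rewrite invf_ge1.
have Xe : e^-1 <= e'^-1 by rewrite lef_pV2 // posrE.
have dKK : d * K <= K by rewrite -{2}(mul1r K) ler_wpM2r.
rewrite dE in h.
exact: (@arith R K e'^-1 _ _ _ K0 X1 h (le_trans (uv i) dKK) Xe).
Qed.
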